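(* Let $R$ be a UFD of characteristic $p>0$, $R[x,y]$ the polynomial ring in two variables, $0\ne a\in R$, $0\ne\theta(y)=\sum_{i\ge1}s_iy^i\in yR[y]$, $f:=ax+\theta(y)$, and $0\ne F\in R[f]$. Let $\phi\in\operatorname{Aut}_RR[x,y]$ be given by $\phi(y)=y+aF$ and $\phi(x)=x+a^{-1}(\theta(y)-\theta(y+aF))$. Let $d:=\gcd(a,\theta'(y))\in R$, $b:=a/d$, $\theta^*(y):=\sum_{i\ge1}s_{pi}y^i$, $q:=y^p-(aF)^{p-1}y$ and $q_1:=d^{-1}(f-\theta^*(q))$. Then $R[x,y]^{\phi}=R_b[q_1,q]\cap R[x,y]$, where $R_b:=R[b^{-1}]$ and the intersection is taken in $R_a[x,y]$.
   Context: $\theta'(y)$ is the formal derivative; $d$ is a greatest common divisor in $R[y]$ of $a$ and $\theta'(y)$, which may be taken in $R$ (if $\theta'(y)=0$, $d=a$). $R[x,y]^{\phi}:=\{u\mid\phi(u)=u\}$. $R_a:=R[a^{-1}]$. The element $q_1$ lies in $R[x,y]$ and in $R[x,y]^{\phi}$. *)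

(* Defs.v *)
From HB Require Import structures.
From mathcomp Require Import all_boot all_order all_algebra.
Set Implicit Arguments. Unset Strict Implicit. Unset Printing Implicit Defensive.
Import Order.TTheory GRing.Theory Num.Theory.
Local Open Scope ring_scope.

Definition dvdr {R : comNzRingType} (x y : R) : Prop := exists c : R, y = c * x.
Definition assocr {R : comUnitRingType} (x y : R) : Prop :=
  exists2 u : R, u \is a GRing.unit & x = u * y.

Definition irreducible_elt {R : idomainType} (p : R) : Prop :=
  p != 0 /\ p \isn't a GRing.unit /\
  forall x y : R, p = x * y -> x \is a GRing.unit \/ y \is a GRing.unit.

Definition is_UFD (R : idomainType) : Prop :=
  (forall x : R, x != 0 -> x \isn't a GRing.unit ->
     exists s : seq R, (forall p, p \in s -> irreducible_elt p) /\ x = \prod_(p <- s) p)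
  /\
  (forall s t : seq R,
     (forall p, p \in s -> irreducible_elt p) ->
     (forall p, p \in t -> irreducible_elt p) ->
     assocr (\prod_(p <- s) p) (\prod_(p <- t) p) ->
     exists t' : seq R, perm_eq t t' /\ size s = size t' /\
       forall i, (i < size s)%N -> assocr (nth 0 s i) (nth 0 t' i)).

Definition is_gcd {R : comNzRingType} (d x y : R) : Prop :=
  dvdr d x /\ dvdr d y /\ (forall g : R, dvdr g x -> dvdr g y -> dvdr g d).

(* Bivariate polynomials R[x,y] are represented as {poly {poly R}}:
   the outer variable is y, the inner variable is x. *)
Definition varx {R : nzRingType} : {poly {poly R}} := ('X)%:P.
Definition vary {R : nzRingType} : {poly {poly R}} := 'X.
Definition cst2 {R : nzRingType} (r : R) : {poly {poly R}} := r%:P%:P.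

Definition eval2 {R : comNzRingType} (u : {poly {poly R}}) (X Y : {poly {poly R}})
  : {poly {poly R}} :=
  (map_poly (fun c : {poly R} => (map_poly (@cst2 R) c).[X]) u).[Y].

Definition evalP {R : comNzRingType} (p : {poly R}) (Z : {poly {poly R}})
  : {poly {poly R}} := (map_poly (@cst2 R) p).[Z].

Definition lift2 {R : idomainType} (u : {poly {poly R}}) : {poly {poly {fraction R}}} :=
  map_poly (map_poly (@FracField.tofrac R)) u.

Definition inRb {R : idomainType} (b : R) (k : {fraction R}) : Prop :=
  exists (r : R) (n : nat),
    k = FracField.tofrac r / (FracField.tofrac b) ^+ n.

Definition theta_star {R : nzRingType} (p : nat) (th : {poly R}) : {poly R} :=
  \poly_(i < size th) th`_(p * i).

(* Main.v *)
Require Import Defs.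
From HB Require Import structures.
From mathcomp Require Import all_boot all_order all_algebra.
From Stdlib Require Import ClassicalEpsilon.
From mathcomp Require Import ring.
Import GRing.Theory.
Set Implicit Arguments. Unset Strict Implicit. Unset Printing Implicit Defensive.
Local Open Scope ring_scope.

Section Cst2.
Variable T : nzRingType.
Lemma cst2_is_zmod : zmod_morphism (@cst2 T).
Proof. by move=> x y; rewrite /cst2 !rmorphB. Qed.
HB.instance Definition _ := GRing.isZmodMorphism.Build T {poly {poly T}} (@cst2 T) cst2_is_zmod.
Lemma cst2_is_monoid : monoid_morphism (@cst2 T).
Proof. by split; [rewrite /cst2 !rmorph1 | move=> x y; rewrite /cst2 !rmorphM]. Qed.
HB.instance Definition _ := GRing.isMonoidMorphism.Build T {poly {poly T}} (@cst2 T) cst2_is_monoid.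
End Cst2.

Section Eval2.
Variable T : comNzRingType.
Implicit Types (u v X Y Z : {poly {poly T}}) (c P Q : {poly T}) (r : T).

Lemma evalPE P Z : evalP P Z = (map_poly (@cst2 T) P).[Z].
Proof. by []. Qed.
Lemma evalPD P Q Z : evalP (P + Q) Z = evalP P Z + evalP Q Z.
Proof. by rewrite !evalPE rmorphD hornerD. Qed.
Lemma evalPB P Q Z : evalP (P - Q) Z = evalP P Z - evalP Q Z.
Proof. by rewrite !evalPE rmorphB hornerD hornerN. Qed.
Lemma evalPM P Q Z : evalP (P * Q) Z = evalP P Z * evalP Q Z.
Proof. by rewrite !evalPE rmorphM hornerM. Qed.
Lemma evalPC r Z : evalP r%:P Z = cst2 r.
Proof. by rewrite evalPE map_polyC hornerC. Qed.
Lemma evalP1 Z : evalP 1 Z = 1.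
Proof. by rewrite evalPE rmorph1 hornerC. Qed.
Lemma evalP0 Z : evalP 0 Z = 0.
Proof. by rewrite evalPE rmorph0 horner0. Qed.
Lemma evalPXp Z : evalP 'X Z = Z.
Proof. by rewrite evalPE map_polyX hornerX. Qed.
Lemma evalPXn P n Z : evalP (P ^+ n) Z = evalP P Z ^+ n.
Proof. by rewrite !evalPE rmorphXn horner_exp. Qed.

Definition evx X := fun c => evalP c X.
Lemma evx_is_zmod X : zmod_morphism (evx X).
Proof. by move=> x y; rewrite /evx evalPB. Qed.
HB.instance Definition _ X := GRing.isZmodMorphism.Build {poly T} {poly {poly T}} (evx X) (evx_is_zmod X).
Lemma evx_is_monoid X : monoid_morphism (evx X).
Proof. by split; [rewrite /evx evalP1 | move=> x y; rewrite /evx evalPM]. Qed.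
HB.instance Definition _ X := GRing.isMonoidMorphism.Build {poly T} {poly {poly T}} (evx X) (evx_is_monoid X).

Lemma eval2E u X Y : eval2 u X Y = (map_poly (evx X) u).[Y].
Proof. by []. Qed.
Lemma eval2D u v X Y : eval2 (u + v) X Y = eval2 u X Y + eval2 v X Y.
Proof. by rewrite !eval2E rmorphD hornerD. Qed.
Lemma eval2B u v X Y : eval2 (u - v) X Y = eval2 u X Y - eval2 v X Y.
Proof. by rewrite !eval2E rmorphB hornerD hornerN. Qed.
Lemma eval2N u X Y : eval2 (- u) X Y = - eval2 u X Y.
Proof. by rewrite !eval2E rmorphN hornerN. Qed.
Lemma eval2M u v X Y : eval2 (u * v) X Y = eval2 u X Y * eval2 v X Y.
Proof. by rewrite !eval2E rmorphM hornerM. Qed.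
Lemma eval2Xn u n X Y : eval2 (u ^+ n) X Y = eval2 u X Y ^+ n.
Proof. by rewrite !eval2E rmorphXn horner_exp. Qed.
Lemma eval2_1 X Y : eval2 1 X Y = 1.
Proof. by rewrite eval2E rmorph1 hornerC. Qed.
Lemma eval2_0 X Y : eval2 0 X Y = 0.
Proof. by rewrite eval2E rmorph0 horner0. Qed.
Lemma eval2C c X Y : eval2 c%:P X Y = evalP c X.
Proof. by rewrite eval2E map_polyC hornerC. Qed.
Lemma eval2_cst r X Y : eval2 (cst2 r) X Y = cst2 r.
Proof. by rewrite /cst2 eval2C evalPC. Qed.
Lemma eval2_varx X Y : eval2 varx X Y = X.
Proof. by rewrite /varx eval2C evalPXp. Qed.
Lemma eval2_vary X Y : eval2 vary X Y = Y.
Proof. by rewrite /vary eval2E map_polyX hornerX. Qed.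

Lemma poly2_ind (Pr : {poly {poly T}} -> Prop) :
  (forall r, Pr (cst2 r)) -> Pr varx -> Pr vary ->
  (forall u v, Pr u -> Pr v -> Pr (u + v)) ->
  (forall u v, Pr u -> Pr v -> Pr (u * v)) -> forall u, Pr u.
Proof.
move=> hC hx hy hD hM u.
have hC' : forall c, Pr c%:P.
  elim/poly_ind => [|c k IH]; first by have := hC 0; rewrite rmorph0.
  rewrite polyCD polyCM; apply: hD; first by apply: hM.
  exact: hC.
elim/poly_ind: u => [|u c IH]; first by have := hC 0; rewrite rmorph0.
by apply: hD; [apply: hM|apply: hC'].
Qed.

Lemma eval2_comp u X1 Y1 X2 Y2 :
  eval2 (eval2 u X1 Y1) X2 Y2 = eval2 u (eval2 X1 X2 Y2) (eval2 Y1 X2 Y2).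
Proof.
elim/poly2_ind: u => [r|||u v IHu IHv|u v IHu IHv].
- by rewrite !eval2_cst.
- by rewrite !eval2_varx.
- by rewrite !eval2_vary.
- by rewrite !eval2D IHu IHv.
- by rewrite !eval2M IHu IHv.
Qed.

Lemma eval2_id u : eval2 u varx vary = u.
Proof.
elim/poly2_ind: u => [r|||u v IHu IHv|u v IHu IHv].
- by rewrite !eval2_cst.
- by rewrite !eval2_varx.
- by rewrite !eval2_vary.
- by rewrite !eval2D IHu IHv.
- by rewrite !eval2M IHu IHv.
Qed.

Lemma evalP_eval2 P Z X Y : eval2 (evalP P Z) X Y = evalP P (eval2 Z X Y).
Proof.
elim/poly_ind: P => [|P k IH]; first by rewrite !evalP0 eval2_0.
by rewrite !evalPD !evalPM !evalPC evalPXp eval2D eval2M IH eval2_cst evalPXp.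
Qed.

Lemma eval2_polyC P X Y : eval2 (map_poly polyC P) X Y = evalP P Y.
Proof.
elim/poly_ind: P => [|P k IH]; first by rewrite rmorph0 evalP0 eval2_0.
rewrite rmorphD rmorphM /= map_polyX map_polyC /= eval2D eval2M IH.
by rewrite evalPD evalPM evalPXp evalPC eval2C evalPC -/vary eval2_vary.
Qed.

Lemma evalP_vary P : evalP P vary = map_poly polyC P.
Proof. by rewrite -(eval2_polyC P varx) eval2_id. Qed.

Lemma evalP_varx P : evalP P varx = P%:P.
Proof.
elim/poly_ind: P => [|P k IH]; first by rewrite evalP0.
by rewrite evalPD evalPM IH evalPXp evalPC polyCD polyCM.
Qed.

Lemma eval2_varx_comp u Y : eval2 u varx Y = u \Po Y.
Proof.
rewrite eval2E /comp_poly; congr (_.[Y]); apply: eq_map_poly => c.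
by rewrite /evx evalP_varx.
Qed.

End Eval2.

Section Lift.
Variable R : idomainType.
Local Notation K := {fraction R}.
Local Notation tof := (@FracField.tofrac R).
Implicit Types (u v X Y Z : {poly {poly R}}) (P : {poly R}) (r : R).

Lemma lift2E u : lift2 u = map_poly (map_poly tof) u.
Proof. by []. Qed.
Lemma lift2D u v : lift2 (u + v) = lift2 u + lift2 v.
Proof. by rewrite !lift2E rmorphD. Qed.
Lemma lift2B u v : lift2 (u - v) = lift2 u - lift2 v.
Proof. by rewrite !lift2E rmorphB. Qed.
Lemma lift2N u : lift2 (- u) = - lift2 u.
Proof. by rewrite !lift2E rmorphN. Qed.
Lemma lift2M u v : lift2 (u * v) = lift2 u * lift2 v.
Proof. by rewrite !lift2E rmorphM. Qed.
Lemma lift2Xn u n : lift2 (u ^+ n) = lift2 u ^+ n.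
Proof. by rewrite !lift2E rmorphXn. Qed.
Lemma lift2_cst r : lift2 (cst2 r) = cst2 (tof r).
Proof. rewrite lift2E /cst2 map_polyC /= map_polyC //. Qed.
Lemma lift2_varx : lift2 (varx : {poly {poly R}}) = varx.
Proof. by rewrite lift2E /varx !map_polyC /= map_polyX. Qed.
Lemma lift2_vary : lift2 (vary : {poly {poly R}}) = vary.
Proof. by rewrite lift2E /vary map_polyX. Qed.
Lemma lift2_0 : lift2 (0 : {poly {poly R}}) = 0.
Proof. by rewrite lift2E rmorph0. Qed.
Lemma lift2_1 : lift2 (1 : {poly {poly R}}) = 1.
Proof. by rewrite lift2E rmorph1. Qed.
Lemma lift2_inj : injective (@lift2 R).
Proof.
have h1 : injective tof by move=> x y /eqP; rewrite tofrac_eq => /eqP.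
have h2 : injective (map_poly tof) by apply: map_inj_poly => //; rewrite rmorph0.
by apply: map_inj_poly => //; rewrite rmorph0.
Qed.

Lemma lift2_evalP P Z : lift2 (evalP P Z) = evalP (map_poly tof P) (lift2 Z).
Proof.
elim/poly_ind: P => [|P k IH]; first by rewrite rmorph0 !evalP0 lift2_0.
by rewrite rmorphD rmorphM /= map_polyX map_polyC /= !evalPD !evalPM !evalPC
  !evalPXp lift2D lift2M IH lift2_cst.
Qed.

Lemma lift2_eval2 u X Y : lift2 (eval2 u X Y) = eval2 (lift2 u) (lift2 X) (lift2 Y).
Proof.
elim/poly2_ind: u => [r|||u v IHu IHv|u v IHu IHv].
- by rewrite eval2_cst lift2_cst eval2_cst.
- by rewrite eval2_varx lift2_varx eval2_varx.
- by rewrite eval2_vary lift2_vary eval2_vary.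
- by rewrite eval2D lift2D IHu IHv lift2D eval2D.
- by rewrite eval2M lift2M IHu IHv lift2M eval2M.
Qed.

Lemma lift2_chi u X : lift2 (eval2 u X vary) = eval2 (lift2 u) (lift2 X) vary.
Proof. by rewrite lift2_eval2 lift2_vary. Qed.

Lemma lift2_varyD X : lift2 (vary + X) = vary + lift2 X.
Proof. by rewrite lift2D lift2_vary. Qed.

Lemma lift2_eval20 u : lift2 (eval2 u 0 vary) = eval2 (lift2 u) 0 vary.
Proof. by rewrite lift2_eval2 lift2_vary lift2_0. Qed.

Lemma lift2_bx r : lift2 (cst2 r * varx) = cst2 (tof r) * varx.
Proof. by rewrite lift2M lift2_cst lift2_varx. Qed.

Lemma lift2_qform n X : lift2 (vary ^+ n - X * vary) = vary ^+ n - lift2 X * vary.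
Proof. by rewrite lift2B lift2M lift2Xn lift2_vary. Qed.

Lemma lift2_qform2 n X : lift2 (vary ^+ n + X) = vary ^+ n + lift2 X.
Proof. by rewrite lift2D lift2Xn lift2_vary. Qed.

Lemma lift2_polyC P : lift2 (map_poly polyC P) = map_poly polyC (map_poly tof P).
Proof. by rewrite -!evalP_vary lift2_evalP lift2_vary. Qed.

Lemma coef_lift2 u i j : (lift2 u)`_i`_j = tof (u`_i`_j).
Proof.
rewrite lift2E coef_map_id0 ?rmorph0 // coef_map_id0 ?rmorph0 //.
Qed.
End Lift.

Lemma tof_split (R : idomainType) (a d b : R) N : a = d * b ->
  FracField.tofrac (a ^+ N) = FracField.tofrac d ^+ N * FracField.tofrac b ^+ N.
Proof. by move=> ->; rewrite exprMn rmorphM !rmorphXn. Qed.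

Section Diff.
Variable T : comNzRingType.
Definition dq (P : {poly T}) (A B : T) :=
  \sum_(i < size P) P`_i * \sum_(k < i) A ^+ (i.-1 - k) * B ^+ k.
Lemma dqP P A B : P.[A] - P.[B] = (A - B) * dq P A B.
Proof.
rewrite !horner_coef -sumrB /dq mulr_sumr; apply: eq_bigr => i _.
by rewrite -mulrBr subrXX mulrCA.
Qed.
Variable S : subringClosed T.
Lemma dq_in P A B : P \is a polyOver S -> A \in S -> B \in S -> dq P A B \in S.
Proof.
move=> /polyOverP hP hA hB; apply: rpred_sum => i _; apply: rpredM => //.
by apply: rpred_sum => k _; apply: rpredM; apply: rpredX.
Qed.
End Diff.

Section PP.
Variable T : comNzRingType.
Variable S : subringClosed T.
Local Notation PP := (polyOver (polyOver_pred S)).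

Lemma cst2_in r : r \in S -> cst2 r \is a PP.
Proof. by move=> h; rewrite /cst2 polyOverC polyOverC. Qed.
Lemma varx_in : (varx : {poly {poly T}}) \is a PP.
Proof. by rewrite /varx polyOverC polyOverX. Qed.
Lemma vary_in : (vary : {poly {poly T}}) \is a PP.
Proof. by rewrite /vary polyOverX. Qed.

Lemma evalP_in P Z : P \is a polyOver S -> Z \is a PP -> evalP P Z \is a PP.
Proof.
move=> /polyOverP hP hZ; rewrite evalPE; apply: rpred_horner => //.
by apply/polyOverP => i; rewrite coef_map_id0 ?rmorph0 // cst2_in.
Qed.

Lemma eval2_in u X Y : u \is a PP -> X \is a PP -> Y \is a PP -> eval2 u X Y \is a PP.
Proof.
move=> /polyOverP hu hX hY; rewrite eval2E; apply: rpred_horner => //.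
apply/polyOverP => i; rewrite coef_map_id0 ?rmorph0 //.
by rewrite /evx evalP_in.
Qed.

Lemma diff2 u A1 B1 A2 B2 : u \is a PP -> A1 \is a PP -> B1 \is a PP ->
  A2 \is a PP -> B2 \is a PP ->
  exists2 E1, E1 \is a PP & exists2 E2, E2 \is a PP &
   eval2 u A1 B1 - eval2 u A2 B2 = (A1 - A2) * E1 + (B1 - B2) * E2.
Proof.
move=> hu hA1 hB1 hA2 hB2.
have hP2 : map_poly (evx A2) u \is a polyOver PP.
  apply/polyOverP => i; rewrite coef_map_id0 ?rmorph0 //.
  by rewrite /evx evalP_in // (polyOverP hu).
exists (\sum_(i < size u) dq (map_poly (@cst2 T) u`_i) A1 A2 * B1 ^+ i).
  apply: rpred_sum => i _; apply: rpredM; last exact: rpredX.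
  apply: dq_in => //; apply/polyOverP => j; rewrite coef_map_id0 ?rmorph0 //.
  by apply: cst2_in; apply: (polyOverP (polyOverP hu i)).
exists (dq (map_poly (evx A2) u) B1 B2); first exact: dq_in.
have -> : eval2 u A1 B1 - eval2 u A2 B2 =
  (eval2 u A1 B1 - eval2 u A2 B1) + (eval2 u A2 B1 - eval2 u A2 B2).
  by rewrite addrA subrK.
congr (_ + _); last by rewrite !eval2E dqP.
rewrite !eval2E.
rewrite (@horner_coef_wide _ (size u)).
rewrite (@horner_coef_wide _ (size u) (map_poly (evx A2) u)).
rewrite -sumrB mulr_sumr; apply: eq_bigr => i _.
rewrite !coef_map_id0 ?rmorph0 // -mulrBl mulrA; congr (_ * _).
by rewrite /evx !evalPE dqP.
exact: size_poly.
exact: size_poly.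
Qed.
End PP.

Definition asb (P : Prop) : bool := if excluded_middle_informative P then true else false.
Lemma asbP (P : Prop) : reflect P (asb P).
Proof. rewrite /asb; case: excluded_middle_informative => h; by constructor. Qed.

Lemma divf_scale (F : fieldType) (x y z : F) : z != 0 -> x / y = (x * z) / (y * z).
Proof. by move=> hz; rewrite invfM mulrACA divff // mulr1. Qed.

Section S.
Variable R : idomainType.
Variable b : R.
Local Notation K := {fraction R}.
Local Notation tof := (@FracField.tofrac R).

Definition Spred : {pred K} := fun k => asb (inRb b k).

Lemma inRb0 (k : K) : inRb 0 k <-> exists r, k = tof r.
Proof.
split.
- move=> [r [[|n] ->]]; first by exists r; rewrite expr0 invr1 mulr1.
  by exists 0; rewrite rmorph0 exprS mul0r invr0 mulr0.
- move=> [r ->]; exists r, 0%N; by rewrite expr0 invr1 mulr1.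
Qed.

Lemma Spred_subring : subring_closed Spred.
Proof.
rewrite /Spred; have [->|hb] := eqVneq b 0.
  split.
  - by apply/asbP/inRb0; exists 1; rewrite rmorph1.
  - move=> x y /asbP/inRb0 [r ->] /asbP/inRb0 [s ->]; apply/asbP/inRb0.
    by exists (r - s); rewrite rmorphB.
  - move=> x y /asbP/inRb0 [r ->] /asbP/inRb0 [s ->]; apply/asbP/inRb0.
    by exists (r * s); rewrite rmorphM.
have hb' : tof b != 0 by rewrite tofrac_eq0.
split.
- apply/asbP; exists 1, 0%N; by rewrite expr0 invr1 mulr1 rmorph1.
- move=> x y /asbP [r [n ->]] /asbP [s [m ->]]; apply/asbP.
  exists (r * b ^+ m - s * b ^+ n), (n + m)%N.
  rewrite rmorphB !rmorphM !rmorphXn exprD mulrBl.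
  rewrite (@divf_scale _ (tof r) (tof b ^+ n) (tof b ^+ m)) ?expf_neq0 //.
  rewrite (@divf_scale _ (tof s) (tof b ^+ m) (tof b ^+ n)) ?expf_neq0 //; by rewrite [_ ^+ m * _]mulrC.
- move=> x y /asbP [r [n ->]] /asbP [s [m ->]]; apply/asbP.
  exists (r * s), (n + m)%N.
  by rewrite !rmorphM exprD invfM mulrACA.
Qed.
HB.instance Definition _ := GRing.isSubringClosed.Build K Spred Spred_subring.

Lemma Spred_tof r : tof r \in Spred.
Proof. apply/asbP; exists r, 0%N; by rewrite expr0 invr1 mulr1. Qed.

Lemma Spred_invb : (tof b)^-1 \in Spred.
Proof. apply/asbP; exists 1; exists 1%N. by rewrite expr1 rmorph1 mul1r. Qed.

End S.

Section Inv.
Variable D : idomainType.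
Variable p : nat.
Hypothesis hp : p \in [pchar D].
Variable c : D.
Hypothesis hc : c != 0.
Local Notation Q := ('X^p - (c ^+ p.-1)%:P * 'X : {poly D}).
Local Notation sh := ('X + c%:P : {poly D}).

Lemma p_gt1 : (1 < p)%N.
Proof. exact: prime_gt1 (pcharf_prime hp). Qed.

Lemma size_Q : size Q = p.+1.
Proof.
rewrite size_polyDl size_polyXn // size_polyN.
have h1 := p_gt1.
by apply: leq_ltn_trans (size_mul_leq _ _) _; rewrite size_polyX size_polyC; case: (_ != 0); rewrite /= ltnS // ltnW.
Qed.

Lemma Q_monic : Q \is monic.
Proof.
rewrite monicE lead_coefDl ?lead_coefXn // size_polyXn size_polyN.
have h1 := p_gt1.
by apply: leq_ltn_trans (size_mul_leq _ _) _; rewrite size_polyX size_polyC; case: (_ != 0); rewrite /= ltnS // ltnW.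
Qed.

Lemma Q_neq0 : Q != 0.
Proof. by rewrite -size_poly_eq0 size_Q. Qed.

Lemma shQ : Q \Po sh = Q.
Proof.
have hpP : p \in [pchar {poly D}] by rewrite pchar_poly.
rewrite comp_polyB comp_polyM comp_polyC comp_polyX rmorphXn /= comp_polyX.
rewrite exprDn_pchar; last by rewrite pnatE ?(pcharf_prime hp)...
rewrite -rmorphXn mulrDr -polyCM -exprSr prednK ?(ltnW p_gt1) //.
by rewrite opprD addrACA subrr addr0.
Qed.

Lemma size_sh : size sh = 2%N.
Proof. by rewrite size_XaddC. Qed.

Lemma root_const (r : {poly D}) : (size r <= p)%N -> r \Po sh = r -> r = (r.[0])%:P.
Proof.
move=> hs hr.
have hroot : forall i, r.[i%:R * c] = r.[0].
  elim=> [|i IH]; first by rewrite mul0r.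
  by rewrite -IH -{2}hr horner_comp !hornerE mulrSr mulrDl mul1r.
apply/eqP; rewrite -subr_eq0; apply/negPn/negP => hne.
have := max_poly_roots hne (rs := [seq i%:R * c | i <- iota 0 p]).
rewrite size_map size_iota.
have -> : all (root (r - (r.[0])%:P)) [seq i%:R * c | i <- iota 0 p].
  by apply/allP => x /mapP [i _ ->]; rewrite /root !hornerE hroot subrr.
have -> : uniq [seq i%:R * c | i <- iota 0 p].
  rewrite map_inj_in_uniq ?iota_uniq // => i j; rewrite !mem_iota !add0n => hi hj /(mulIf hc) hij.
  wlog le_ij : i j hi hj hij / (i <= j)%N.
    by move=> H; case: (leqP i j) => h; [apply: H | apply/esym/H => //; apply: ltnW].
  have : (p %| j - i)%N by rewrite (dvdn_pcharf hp) natrB // hij subrr.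
  have hlt : (j - i < p)%N by apply: leq_ltn_trans (leq_subr _ _) hj.
  case hji : (j - i)%N => [|k]; first by move=> _; apply/eqP; rewrite eqn_leq le_ij -subn_eq0 hji.
  by rewrite hji in hlt => /(dvdn_leq (ltn0Sn k)); rewrite leqNgt hlt.
move=> /(_ isT isT); apply/negP; rewrite -leqNgt.
apply: leq_trans (size_polyD _ _) _; rewrite geq_max hs size_polyN size_polyC.
by case: (_ != 0) => //=; rewrite (ltnW p_gt1).
Qed.

Lemma inv_decomp (w : {poly D}) : w \Po sh = w -> exists W : {poly D}, w = W \Po Q.
Proof.
move: {2}(size w) (leqnn (size w)) => n; elim: n w => [|n IH] w hsz hw.
  by exists 0; move: hsz; rewrite leqn0 size_poly_eq0 comp_poly0 => /eqP.
have mQ := Q_monic.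
have [qd qdE] : {qd | qd = Pdiv.Ring.rdivp w Q} by eexists.
have [r rE] : {r | r = Pdiv.Ring.rmodp w Q} by eexists.
have hweq : w = qd * Q + r by rewrite qdE rE; apply: Pdiv.RingMonic.rdivp_eq.
have hr : (size r < size Q)%N by rewrite rE; apply: Pdiv.Ring.ltn_rmodpN0; apply: Q_neq0.
have hsw : w = (qd \Po sh) * Q + (r \Po sh).
  by rewrite -{1}hw {1}hweq comp_polyD comp_polyM shQ.
have hsr : (size (r \Po sh) < size Q)%N by rewrite size_comp_poly2 ?size_sh.
have hqd : qd \Po sh = qd.
  by rewrite [RHS]qdE [in RHS]hsw (Pdiv.RingMonic.rdivp_addl_mul_small mQ).
have hrr : r \Po sh = r.
  by rewrite [RHS]rE [in RHS]hsw (Pdiv.RingMonic.rmodp_addl_mul_small mQ).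
have [W1 hW1] : exists W1, qd = W1 \Po Q.
  have [->|qd0] := eqVneq qd 0; first by exists 0; rewrite comp_poly0.
  apply: IH hqd; rewrite -ltnS; apply: leq_trans hsz.
  have hsz2 : size (qd * Q) = (size qd + p)%N by rewrite size_mul ?Q_neq0 // size_Q addnS.
  rewrite hweq size_polyDl; last first.
    by rewrite hsz2; apply: leq_trans hr _; rewrite size_Q -add1n leq_add2r size_poly_gt0.
  by rewrite hsz2 -addn1 leq_add2l (ltnW p_gt1).
have hrc := root_const (r := r); rewrite size_Q ltnS in hr.
exists (W1 * 'X + (r.[0])%:P).
by rewrite comp_polyD comp_polyM comp_polyX comp_polyC -hW1 -hrc // {1}hweq.
Qed.
End Inv.


Lemma coef_dvd_poly (T : comNzRingType) (P : {poly T}) (m : T) :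
  (forall i, exists c, P`_i = m * c) -> exists g, P = m *: g.
Proof.
elim/poly_ind: P => [|P k IH] h; first by exists 0; rewrite scaler0.
have [c0 hc0] := h 0%N.
have [g hg] : exists g, P = m *: g.
  apply: IH => i; have [c hc] := h i.+1; exists c.
  by rewrite -hc coefD coefMX coefC /= addr0.
exists (g * 'X + c0%:P).
rewrite scalerDr scalerAl -hg -mul_polyC -polyCM -hc0.
by rewrite coefD coefMX coefC /= add0r.
Qed.

Lemma evalP_comp (T : comNzRingType) (P Q : {poly T}) Z :
  evalP (P \Po Q) Z = evalP P (evalP Q Z).
Proof.
elim/poly_ind: P => [|P k IH]; first by rewrite comp_poly0 !evalP0.
by rewrite comp_polyD comp_polyM comp_polyX comp_polyC !evalPD !evalPM IH
  !evalPC evalPXp.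
Qed.

Lemma evalPZ (T : comNzRingType) (P : {poly T}) k Z :
  evalP (k *: P) Z = cst2 k * evalP P Z.
Proof. by rewrite -mul_polyC evalPM evalPC. Qed.

Lemma coef_cst2M (T : comNzRingType) (k : T) (P : {poly {poly T}}) i j :
  (cst2 k * P)`_i`_j = k * P`_i`_j.
Proof. by rewrite /cst2 coefCM coefCM. Qed.

Section Main.
Variables (R : idomainType) (pp : nat).
Local Notation p := pp.+2.
Hypothesis hp : p \in [pchar R].
Variables (a : R) (theta : {poly R}) (G0 : {poly R}) (d b : R).
Hypothesis ha : a != 0.
Hypothesis hG0 : G0 != 0.
Hypothesis hdvd : dvdr (d%:P) (theta^`()).
Hypothesis hb : a = d * b.

Local Notation fR := (cst2 a * varx + map_poly polyC theta).
Local Notation FR := (evalP G0 fR).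
Local Notation qR := (vary ^+ p - (cst2 a * FR) ^+ p.-1 * vary).
Local Notation ts := (theta_star p theta).

Lemma d_neq0 : d != 0.
Proof. by apply: contraNneq ha => hd0; rewrite hb hd0 mul0r. Qed.
Lemma b_neq0 : b != 0.
Proof. by apply: contraNneq ha => hb0; rewrite hb hb0 mulr0. Qed.

Lemma theta_coef_dvd i : ~~ (p %| i)%N -> exists c, theta`_i = d * c.
Proof.
move=> hpi; have [C hC] := hdvd.
case: i hpi => [|k] hpi; first by rewrite dvdn0 in hpi.
have hk : (theta^`())`_k = (C * d%:P)`_k by rewrite hC.
rewrite coef_deriv coefMC in hk.
have pr := pcharf_prime hp.
have cop : coprime k.+1 p by rewrite coprime_sym prime_coprime.
case: (egcdnP p (ltn0Sn k)) => km kn hkm _.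
rewrite (eqP cop) in hkm.
exists (km%:R * C`_k).
have -> : theta`_k.+1 = theta`_k.+1 * (km * k.+1)%:R.
  by rewrite hkm natrD natrM (pcharf0 hp) mulr0 add0r mulr1.
by rewrite natrM mulrA mulrAC [theta`_k.+1 * _]mulr_natr hk [C`_k * d]mulrC -mulrA [C`_k * _]mulrC.
Qed.

Lemma theta_decomp : exists g1, theta - (ts \Po 'X^p) = d *: g1.
Proof.
apply: coef_dvd_poly => i.
rewrite coefB coef_comp_poly_Xn //.
case: ifP => hpi; last first.
  by rewrite subr0; apply: theta_coef_dvd; rewrite hpi.
exists 0; rewrite mulr0 /theta_star coef_poly.
case: ifP => hlt; first by rewrite mulnC divnK // subrr.
rewrite subr0 nth_default //.
by rewrite leqNgt; apply: contraFN hlt => hi; apply: leq_ltn_trans (leq_div _ _) hi.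
Qed.

Lemma yp_minus_q : vary ^+ p - qR =
  cst2 d * (cst2 b * cst2 a ^+ pp * FR ^+ pp.+1 * vary).
Proof.
rewrite opprD opprK addrA subrr add0r /= exprMn exprS hb rmorphM /=.
by ring.
Qed.

Lemma q1R_ex : exists q1R, cst2 d * q1R = fR - evalP ts qR.
Proof.
have [g1 hg1] := theta_decomp.
have hth : map_poly polyC theta = evalP ts (vary ^+ p) + cst2 d * evalP g1 vary.
  have h1 : evalP ts (vary ^+ p) = evalP (ts \Po 'X^p) vary.
    by rewrite evalP_comp evalPXn evalPXp.
  by rewrite h1 -evalPZ -hg1 -evalPD addrC subrK evalP_vary.
have hE : evalP ts (vary ^+ p) - evalP ts qR =
   cst2 d * (cst2 b * cst2 a ^+ pp * FR ^+ pp.+1 * vary) *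
   dq (map_poly (@cst2 R) ts) (vary ^+ p) qR.
  by rewrite !evalPE dqP yp_minus_q.
exists (cst2 b * varx + evalP g1 vary + (cst2 b * cst2 a ^+ pp * FR ^+ pp.+1 * vary) *
   dq (map_poly (@cst2 R) ts) (vary ^+ p) qR).
set Q := qR in hE *; set FF := FR in hE *.
rewrite hth -(subrK (evalP ts Q) (evalP ts (vary ^+ p))) hE hb rmorphM /=.
by ring.
Qed.

Lemma cst2_neq0 (k : R) : k != 0 -> cst2 k != 0.
Proof. by move=> hk; rewrite /cst2 !polyC_eq0. Qed.

Lemma q1R_decomp q1R : cst2 d * q1R = fR - evalP ts qR ->
  exists r1, q1R = cst2 b * varx + eval2 q1R 0 vary + cst2 d * r1.
Proof.
move=> h.
set thy := map_poly polyC theta.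
set F0 := evalP G0 thy.
set q0 := vary ^+ p - (cst2 a * F0) ^+ pp.+1 * vary.
have hf0 : eval2 fR 0 vary = thy.
  by rewrite eval2D eval2M eval2_cst eval2_varx mulr0 add0r eval2_polyC evalP_vary.
have hq0 : eval2 qR 0 vary = q0.
  by rewrite eval2B [eval2 (vary ^+ _) _ _]eval2Xn eval2M [eval2 (_ ^+ _) _ _]eval2Xn eval2M eval2_cst eval2_vary evalP_eval2 hf0.
have e0 : cst2 d * eval2 q1R 0 vary = thy - evalP ts q0.
  by rewrite -(eval2_cst d 0 vary) -eval2M h eval2B evalP_eval2 hf0 hq0.
set D1 := dq (map_poly (@cst2 R) ts) qR q0.
have hD1 : evalP ts qR - evalP ts q0 = (qR - q0) * D1 by rewrite !evalPE dqP.
set D3 := dq (map_poly (@cst2 R) G0) fR thy.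
have hD3 : FR - F0 = cst2 a * varx * D3 by rewrite !evalPE dqP addrK.
set D2 := \sum_(i < pp.+1) FR ^+ (pp.+1.-1 - i) * F0 ^+ i.
have hD2 : FR ^+ pp.+1 - F0 ^+ pp.+1 = (FR - F0) * D2 by rewrite subrXX.
have key : qR - q0 = - (cst2 a ^+ pp.+2 * varx * D3 * D2 * vary).
  have hD : FR ^+ pp.+1 = F0 ^+ pp.+1 + cst2 a * varx * D3 * D2.
    by rewrite -hD3 -hD2 [RHS]addrC subrK.
  rewrite /q0 !exprMn hD.
  clear hD hD2 hD3 hD1; move: D2 D3 (F0 ^+ pp.+1) => D2' D3' FF.
  rewrite !exprS.
  by ring.
exists (cst2 d ^+ pp * cst2 b ^+ pp.+2 * varx * D3 * D2 * vary * D1).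
apply: (mulfI (cst2_neq0 d_neq0)); rewrite h.
rewrite -(subrK (evalP ts q0) (evalP ts qR)) hD1 key.
rewrite mulrDr mulrDr e0.
clear hD1 hD2 hD3 key; move: D1 D2 D3 (evalP ts q0) => D1' D2' D3' E0.
rewrite hb rmorphM /= !exprMn !exprS.
by ring.
Qed.

End Main.

Section GenK.
Variables (F : fieldType) (a : F) (th : {poly F}).
Hypothesis ha : a != 0.
Local Notation fK := (cst2 a * varx + map_poly polyC th).

Lemma cst2_inv (k : F) : k != 0 -> cst2 k * cst2 k^-1 = 1.
Proof. by move=> hk; rewrite -rmorphM /= divff // rmorph1. Qed.

Lemma cst2_invK (k : F) (P : {poly {poly F}}) : k != 0 -> cst2 k^-1 * (cst2 k * P) = P.
Proof. by move=> hk; rewrite mulrA [cst2 k^-1 * _]mulrC cst2_inv // mul1r. Qed.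

Lemma final_cancel (dN bN : F) (U : {poly {poly F}}) : dN != 0 -> bN != 0 ->
  U = cst2 bN^-1 * (cst2 dN^-1 * (cst2 dN * (cst2 bN * U))).
Proof. by move=> hd hb; rewrite cst2_invK // cst2_invK. Qed.

Lemma chiK_inj (V W : {poly {poly F}}) :
  eval2 V fK vary = eval2 W fK vary -> V = W.
Proof.
move=> h.
set psix := cst2 a^-1 * (varx - map_poly polyC th).
have hpsi : eval2 fK psix vary = varx.
  rewrite eval2D eval2M eval2_cst eval2_varx eval2_polyC evalP_vary /psix.
  by rewrite mulrA cst2_inv // mul1r subrK.
have := congr1 (fun Z => eval2 Z psix vary) h.
by rewrite /= !eval2_comp hpsi eval2_vary !eval2_id.
Qed.

Lemma phi_fK (aF : {poly {poly F}}) :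
  eval2 fK (varx + cst2 a^-1 * (evalP th vary - evalP th (vary + aF))) (vary + aF) = fK.
Proof.
rewrite eval2D eval2M eval2_cst eval2_varx eval2_polyC.
rewrite mulrDr mulrA cst2_inv // mul1r evalP_vary.
by rewrite -addrA subrK.
Qed.
End GenK.

Lemma phi_q (T : comNzRingType) (pp : nat) (hp : pp.+2 \in [pchar T])
  (X aF : {poly {poly T}}) : eval2 aF X (vary + aF) = aF ->
  eval2 (vary ^+ pp.+2 - aF ^+ pp.+1 * vary) X (vary + aF) =
  vary ^+ pp.+2 - aF ^+ pp.+1 * vary.
Proof.
move=> h.
have hp2 : pp.+2 \in [pchar {poly {poly T}}] by rewrite !pchar_poly.
rewrite eval2B [eval2 (vary ^+ _) _ _]eval2Xn eval2M [eval2 (aF ^+ _) _ _]eval2Xn h eval2_vary.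
rewrite exprDn_pchar; last by rewrite pnatE ?(pcharf_prime hp2).
rewrite mulrDr -exprSr.
by rewrite opprD addrACA subrr addr0.
Qed.


Section Descent.
Variables (F : fieldType) (S : subringClosed F) (b d : F) (pp : nat).
Local Notation p := pp.+2.
Local Notation PP := (polyOver (polyOver_pred S)).
Hypotheses (hbinv : b^-1 \in S) (hbS : b \in S) (hdS : d \in S).
Hypotheses (hd0 : d != 0) (hb0 : b != 0).
Variables (q1 qq r1 r2 : {poly {poly F}}).
Hypotheses (hq1in : q1 \is a PP) (hqqin : qq \is a PP) (hr1 : r1 \is a PP) (hr2 : r2 \is a PP).
Hypothesis hq1 : q1 = cst2 b * varx + eval2 q1 0 vary + cst2 d * r1.
Hypothesis hqq : qq = vary ^+ p + cst2 d * r2.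

Lemma cst2_neq0F (k : F) : k != 0 -> cst2 k != 0.
Proof. by move=> hk; rewrite /cst2 !polyC_eq0. Qed.

Lemma descent_step (Hn w : {poly {poly F}}) : Hn \is a PP -> w \is a PP ->
  eval2 Hn q1 qq = cst2 d * w -> cst2 d^-1 * Hn \is a PP.
Proof.
move=> hH hw heq.
set g := eval2 q1 0 vary.
have hg : g \is a PP by apply: eval2_in => //; [exact: rpred0 | exact: vary_in].
set A2 := cst2 b * varx + g.
have hA2 : A2 \is a PP by rewrite rpredD // rpredM // ?cst2_in ?varx_in.
have hB2 : (vary ^+ p : {poly {poly F}}) \is a PP by rewrite rpredX // vary_in.
have [E1 hE1 [E2 hE2 hdiff]] := diff2 hH hq1in hqqin hA2 hB2.
have e1 : q1 - A2 = cst2 d * r1 by rewrite {1}hq1 -/g -/A2 addrAC subrr add0r.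
have e2 : qq - vary ^+ p = cst2 d * r2 by rewrite hqq addrAC subrr add0r.
rewrite e1 e2 heq in hdiff.
set w' := w - r1 * E1 - r2 * E2.
have hw' : w' \is a PP by rewrite !rpredB // rpredM.
have heq2 : eval2 Hn A2 (vary ^+ p) = cst2 d * w'.
  have -> : eval2 Hn A2 (vary ^+ p) = cst2 d * w - (cst2 d * r1 * E1 + cst2 d * r2 * E2).
    by rewrite -hdiff opprB addrCA subrr addr0.
  by rewrite /w'; ring.
set tx := cst2 b^-1 * (varx - g).
have htx : tx \is a PP by rewrite rpredM ?cst2_in // rpredB // varx_in.
have hgx : eval2 g tx vary = g by rewrite /g eval2_comp eval2_0 eval2_vary.
have hA2x : eval2 A2 tx vary = varx.
  by rewrite /A2 eval2D eval2M eval2_cst eval2_varx hgx mulrA cst2_inv // mul1r subrK.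
have hfin := congr1 (fun Z => eval2 Z tx vary) heq2.
rewrite /= eval2_comp hA2x eval2Xn eval2_vary eval2M eval2_cst eval2_varx_comp in hfin.
set z := eval2 w' tx vary in hfin.
have hz : z \is a PP by apply: eval2_in => //; exact: vary_in.
apply/polyOverP => j; apply/polyOverP => i; rewrite coef_cst2M.
have := congr1 (fun P : {poly {poly F}} => P`_(p * j)`_i) hfin.
rewrite /= coef_comp_poly_Xn // dvdn_mulr // mulKn // coef_cst2M => ->.
rewrite mulrA mulVf // mul1r.
exact: (polyOverP (polyOverP hz _)).
Qed.

Lemma descent n : forall (Hn w : {poly {poly F}}), Hn \is a PP -> w \is a PP ->
  eval2 Hn q1 qq = cst2 (d ^+ n) * w -> cst2 (d ^+ n)^-1 * Hn \is a PP.
Proof.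
elim: n => [|n IH] Hn w hH hw heq.
  by rewrite expr0 invr1 rmorph1 mul1r.
have heq' : eval2 Hn q1 qq = cst2 d * (cst2 (d ^+ n) * w).
  by rewrite heq exprS rmorphM mulrA.
have hw' : cst2 (d ^+ n) * w \is a PP by rewrite rpredM // cst2_in // rpredX.
have hH' := descent_step hH hw' heq'.
have hHn : Hn = cst2 d * (cst2 d^-1 * Hn) by rewrite mulrA cst2_inv // mul1r.
have heq'' : eval2 (cst2 d^-1 * Hn) q1 qq = cst2 (d ^+ n) * w.
  apply: (mulfI (cst2_neq0F hd0)).
  by rewrite -heq' [in RHS]hHn [in RHS]eval2M [in RHS]eval2_cst.
have := IH _ _ hH' hw heq''.
by rewrite mulrA -rmorphM -invfM -exprSr.
Qed.
End Descent.

Section Main.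
Variables (R : idomainType) (pp : nat).
Local Notation p := pp.+2.
Hypothesis hp : p \in [pchar R].
Variables (a : R) (theta : {poly R}) (G0 : {poly R}) (d b : R).
Hypothesis ha : a != 0.
Hypothesis hG0 : G0 != 0.
Hypothesis hdvd : dvdr (d%:P) (theta^`()).
Hypothesis hb : a = d * b.

Local Notation fR := (cst2 a * varx + map_poly polyC theta).
Local Notation FR := (evalP G0 fR).
Local Notation qR := (vary ^+ p - (cst2 a * FR) ^+ p.-1 * vary).
Local Notation ts := (theta_star p theta).


Local Notation chi w := (eval2 w fR vary).
Local Notation cc := (cst2 a * evalP G0 varx).

Lemma chi_ex (w : {poly {poly R}}) : exists N v, chi v = cst2 (a ^+ N) * w.
Proof.
elim/poly2_ind: w => [r|||u v [N1 [v1 h1]] [N2 [v2 h2]]|u v [N1 [v1 h1]] [N2 [v2 h2]]].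
- by exists 0%N, (cst2 r); rewrite eval2_cst expr0 rmorph1 mul1r.
- exists 1%N, (varx - map_poly polyC theta).
  by rewrite eval2B eval2_varx eval2_polyC evalP_vary expr1 addrK.
- by exists 0%N, vary; rewrite eval2_vary expr0 rmorph1 mul1r.
- exists (N1 + N2)%N, (cst2 (a ^+ N2) * v1 + cst2 (a ^+ N1) * v2).
  rewrite eval2D !eval2M !eval2_cst h1 h2 exprD !rmorphM /=.
  by ring.
- exists (N1 + N2)%N, (v1 * v2).
  rewrite eval2M h1 h2 exprD !rmorphM /=.
  by ring.
Qed.

Lemma chi_sigma (w : {poly {poly R}}) : chi (eval2 w varx (vary + cc)) = eval2 w fR (vary + cst2 a * FR).
Proof.
by rewrite eval2_comp eval2_varx eval2D eval2_vary eval2M eval2_cst evalP_eval2 eval2_varx.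
Qed.

Local Notation K := {fraction R}.
Local Notation tof := (@FracField.tofrac R).
Local Notation thK := (map_poly tof theta).
Local Notation aF := (lift2 (cst2 a * FR)).
Local Notation phiy := (vary + aF).
Local Notation phix := (varx + cst2 (tof a)^-1 * (evalP thK vary - evalP thK phiy)).

Lemma tofa_neq0 : tof a != 0.
Proof. by rewrite tofrac_eq0. Qed.

Lemma lift_fR : lift2 fR = cst2 (tof a) * varx + map_poly polyC thK.
Proof. by rewrite lift2D lift2M lift2_cst lift2_varx lift2_polyC. Qed.



Lemma chi_inj (v1 v2 : {poly {poly R}}) : chi v1 = chi v2 -> v1 = v2.
Proof.
move=> h; apply: lift2_inj.
have := congr1 (@lift2 R) h.
rewrite !lift2_chi lift_fR.
exact: (chiK_inj tofa_neq0).
Qed.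

Lemma phi_fR : eval2 (lift2 fR) phix phiy = lift2 fR.
Proof. rewrite lift_fR; exact: phi_fK tofa_neq0 _. Qed.

Lemma phi_lift_chi (w : {poly {poly R}}) :
  eval2 (lift2 (chi w)) phix phiy = lift2 (chi (eval2 w varx (vary + cc))).
Proof.
rewrite chi_sigma lift2_chi eval2_comp phi_fR eval2_vary.
by rewrite lift2_eval2 lift2_varyD.
Qed.

Lemma sigma_fix (u : {poly {poly R}}) N (v : {poly {poly R}}) : eval2 (lift2 u) phix phiy = lift2 u ->
  chi v = cst2 (a ^+ N) * u -> eval2 v varx (vary + cc) = v.
Proof.
move=> hu hv; apply: chi_inj; apply: lift2_inj.
rewrite -phi_lift_chi hv lift2M lift2_cst eval2M eval2_cst hu.
by rewrite -lift2_cst -lift2M -hv.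
Qed.

Lemma v_decomp (v : {poly {poly R}}) : eval2 v varx (vary + cc) = v ->
  exists W, v = eval2 W varx (vary ^+ p - cc ^+ pp.+1 * vary).
Proof.
have hp' : p \in [pchar {poly R}] by rewrite pchar_poly.
have hc : a%:P * G0 != 0 by rewrite mulf_neq0 ?polyC_eq0.
have hcc : cc = (a%:P * G0)%:P by rewrite evalP_varx /cst2 polyCM.
rewrite hcc eval2_varx_comp => h.
have [W hW] := inv_decomp hp' hc h.
exists W; rewrite eval2_varx_comp hW; congr (_ \Po _).
by rewrite /vary rmorphXn.
Qed.

Lemma chi_decomp (W : {poly {poly R}}) :
  chi (eval2 W varx (vary ^+ p - cc ^+ pp.+1 * vary)) = eval2 W fR qR.
Proof.
rewrite eval2_comp eval2_varx; congr (eval2 W fR _).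
rewrite eval2B [eval2 (vary ^+ _) _ _]eval2Xn eval2M [eval2 (cc ^+ _) _ _]eval2Xn.
by rewrite eval2M eval2_cst evalP_eval2 !eval2_varx !eval2_vary.
Qed.

Lemma R_repr (u : {poly {poly R}}) : eval2 (lift2 u) phix phiy = lift2 u ->
  forall q1R, cst2 d * q1R = fR - evalP ts qR ->
  exists N H, cst2 (a ^+ N) * u = eval2 H q1R qR.
Proof.
move=> hu q1R h1.
have [N [v hv]] := chi_ex u.
have hs := sigma_fix hu hv.
have [W hW] := v_decomp hs.
exists N, (eval2 W (cst2 d * varx + map_poly polyC ts) vary).
rewrite -hv hW chi_decomp eval2_comp eval2D eval2M eval2_cst eval2_varx eval2_polyC.
by rewrite eval2_vary h1 subrK.
Qed.

Lemma tof_pchar : p \in [pchar K].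
Proof. exact: (rmorph_pchar tof hp). Qed.

Lemma aF_fix : eval2 aF phix phiy = aF.
Proof.
have e : aF = cst2 (tof a) * evalP (map_poly tof G0) (lift2 fR).
  by rewrite lift2M lift2_cst lift2_evalP.
by rewrite {1}e eval2M eval2_cst evalP_eval2 phi_fR -e.
Qed.

Lemma qK_fix : eval2 (lift2 qR) phix phiy = lift2 qR.
Proof.
rewrite lift2_qform lift2Xn.
exact: (phi_q tof_pchar aF_fix).
Qed.

Lemma q1K_fix q1R : cst2 d * q1R = fR - evalP ts qR ->
  eval2 (lift2 q1R) phix phiy = lift2 q1R.
Proof.
move=> h.
have h' : cst2 (tof d) * lift2 q1R = lift2 fR - evalP (map_poly tof ts) (lift2 qR).
  by rewrite -lift2_cst -lift2M h lift2B lift2_evalP.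
have hd0 : tof d != 0 by rewrite tofrac_eq0 (d_neq0 ha hb).
have e : lift2 q1R = cst2 (tof d)^-1 * (lift2 fR - evalP (map_poly tof ts) (lift2 qR)).
  by rewrite -h' cst2_invK.
by rewrite [in LHS]e eval2M eval2_cst eval2B evalP_eval2 phi_fR qK_fix -e.
Qed.
End Main.

Lemma lift2_in (R : idomainType) (b : R) (u : {poly {poly R}}) :
  lift2 u \is a polyOver (polyOver_pred (Spred b)).
Proof.
apply/polyOverP => i; apply/polyOverP => j; rewrite coef_lift2; exact: Spred_tof.
Qed.

Local Notation tofR := (@FracField.tofrac _).
Unset Implicit Arguments.

Theorem theorem6p4 (R : idomainType) (hUFD : is_UFD R) (p : nat)
  (hp : p \in [pchar R])
  (a : R) (ha : a != 0)
  (theta : {poly R}) (htheta : theta != 0) (htheta0 : theta`_0 = 0)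
  (F : {poly {poly R}}) (hF : F != 0)
  (hFf : exists G : {poly R},
      F = evalP G (cst2 a * varx + map_poly polyC theta))
  (d b : R)
  (hd : is_gcd (d%:P) (a%:P) (theta^`()))
  (hb : a = d * b) :
  let f : {poly {poly R}} := cst2 a * varx + map_poly polyC theta in
  let K := {fraction R} in
  let tof := @FracField.tofrac R in
  let aF : {poly {poly K}} := lift2 (cst2 a * F) in
  let thK : {poly K} := map_poly tof theta in
  let phiy : {poly {poly K}} := vary + aF in
  let phix : {poly {poly K}} :=
    varx + cst2 (tof a)^-1 * (evalP thK vary - evalP thK phiy) in
  let q : {poly {poly R}} := vary ^+ p - (cst2 a * F) ^+ p.-1 * vary in
  let q1 : {poly {poly K}} :=
    cst2 (tof d)^-1 * lift2 (f - evalP (theta_star p theta) q) in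
  forall u : {poly {poly R}},
    eval2 (lift2 u) phix phiy = lift2 u
    <->
    exists G : {poly {poly K}},
      (forall i j : nat, inRb b (G`_i`_j)) /\ lift2 u = eval2 G q1 (lift2 q).
Proof.
have hpr := pcharf_prime hp.
case: p hp hpr => [|[|pp]] hp hpr; [by [] | by [] | ].
case: hFf => G0 hFG; subst F.
have hG0 : G0 != 0 by apply: contraNneq hF => ->; rewrite evalP0.
have hdvd : dvdr d%:P theta^`() := hd.2.1.
have hd0 := d_neq0 ha hb.
have hb0 := b_neq0 ha hb.
have [q1R hq1R] := q1R_ex hp G0 hdvd hb.
move=> f K tofR aF thK phiy phix q q1 u.
have hq1 : q1 = lift2 q1R.
  rewrite /q1 /f /q -hq1R.
  rewrite lift2M lift2_cst cst2_invK //.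
  by rewrite tofrac_eq0.
rewrite hq1 /phix /phiy /aF /thK /q.
split.
- move=> hu.
  have [N [H hH]] := R_repr hp ha hG0 hu hq1R.
  have [Q hQ] : {Q | Q = vary ^+ pp.+2 - (cst2 a * evalP G0 (cst2 a * varx + theta^:P)) ^+ pp.+2.-1 * vary}.
    by eexists.
  rewrite -hQ in hH *.
  have [r1 hr1] := q1R_decomp ha hb hq1R.
  have hQ2 : Q = vary ^+ pp.+2 + cst2 d * (- (cst2 b * cst2 a ^+ pp *
      evalP G0 (cst2 a * varx + theta^:P) ^+ pp.+1 * vary)).
    by rewrite mulrN -(yp_minus_q pp theta G0 hb) -hQ opprB addrCA subrr addr0.
  set r2 := - _ in hQ2.
  have hq1K : lift2 q1R = cst2 (tofR b) * varx + eval2 (lift2 q1R) 0 vary + cst2 (tofR d) * lift2 r1.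
    by rewrite {1}hr1 !lift2D lift2_bx lift2_eval20 lift2M lift2_cst.
  have hQK : lift2 Q = vary ^+ pp.+2 + cst2 (tofR d) * lift2 r2.
    by rewrite hQ2 lift2_qform2 lift2M lift2_cst.
  have hd0' : tofR d != 0 by rewrite tofrac_eq0.
  have hb0' : tofR b != 0 by rewrite tofrac_eq0.
  have heq : eval2 (lift2 H) (lift2 q1R) (lift2 Q) =
      cst2 (tofR d ^+ N) * (cst2 (tofR b ^+ N) * lift2 u).
    have hH' := congr1 (@lift2 R) hH.
    rewrite lift2_eval2 lift2M lift2_cst in hH'.
    have htf := tof_split N hb.
    rewrite -hH' htf rmorphM.
    move: (lift2 u) => U.
    by rewrite mulrA.
  have hdesc := descent (Spred_invb b) (Spred_tof b b) (Spred_tof b d) hd0' hb0'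
    (lift2_in b q1R) (lift2_in b Q) (lift2_in b r1) (lift2_in b r2) hq1K hQK
    (lift2_in b H) (rpredM (cst2_in (rpredX N (Spred_tof b b))) (lift2_in b u)) heq.
  move: hdesc heq; move: (lift2 H) (lift2 u) (lift2 q1R) (lift2 Q) => LH U Q1 QQ hdesc heq.
  exists (cst2 (tofR b ^+ N)^-1 * (cst2 (tofR d ^+ N)^-1 * LH)).
  split.
    move=> i j.
    have hGin : cst2 (tofR b ^+ N)^-1 * (cst2 (tofR d ^+ N)^-1 * LH)
        \is a polyOver (polyOver_pred (Spred b)).
      apply: rpredM hdesc; apply: cst2_in; rewrite -exprVn; apply: rpredX; exact: Spred_invb.
    by have /asbP := polyOverP (polyOverP hGin i) j.
  rewrite eval2M eval2_cst eval2M eval2_cst heq.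
  have hdN : tofR d ^+ N != 0 := expf_neq0 N hd0'.
  have hbN : tofR b ^+ N != 0 := expf_neq0 N hb0'.
  move: (tofR d ^+ N) (tofR b ^+ N) hdN hbN => dN bN hdN hbN.
  exact: final_cancel hdN hbN.
- move=> [G [_ hG]].
  rewrite hG eval2_comp (q1K_fix hp ha hb hq1R) (qK_fix hp _ _ ha).
  by [].
Qed.
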